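(* Let $n \geq 1$ be an integer and consider Nim on the hypercube $Q_{2n+1}$ in which every edge has weight $1$, with the playing piece $\Delta$ starting at the vertex $\emptyset$. Then the first player $P_1$ has a winning strategy.
   Context: Nim on a graph: two players agree on a finite simple undirected graph $G$ whose edges carry positive integer weights, and a starting vertex on which a playing piece $\Delta$ is placed. Players $P_1$ (who moves first) and $P_2$ alternate. On a turn, the player chooses an edge of positive weight incident with the vertex currently holding $\Delta$, lowers that edge's weight by a positive integer amount, and moves $\Delta$ to the other endpoint of that edge. Edges of weight $0$ are no longer playable. A player who cannot move (no playable edge is incident with $\Delta$) loses. With unit weight, each edge can be traversed at most once in total. The hypercube $Q_m$ has as vertices the subsets $X \subseteq \{1,\dots,m\}$, two vertices being adjacent iff they differ in exactly one element; $\emptyset$ denotes the empty set (by vertex-transitivity the choice of starting vertex is immaterial). *)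

(* Defs.v *)
From mathcomp Require Import all_boot.
Set Implicit Arguments. Unset Strict Implicit. Unset Printing Implicit Defensive.

(* The graph has vertex type T : finType and adjacency
   relation adj (intended symmetric, irreflexive).  Edges are identified with
   the unordered pairs [set u; v]; a weighting is a finite function from
   2-subsets to nat (only values on edges matter). *)

Definition weighting (T : finType) := {ffun {set T} -> nat}.

Definition position (T : finType) := (weighting T * T)%type.

Definition nim_move (T : finType) (adj : rel T) (p q : position T) : Prop :=
  let: (w, v) := p in
  let: (w', u) := q in
  [/\ adj v u,
      w' [set v; u] < w [set v; u] &
      forall f : {set T}, f != [set v; u] -> w' f = w f].

Inductive Win (T : finType) (adj : rel T) : position T -> Prop :=
  | WinMove p q : nim_move adj p q -> Lose adj q -> Win adj p
with Lose (T : finType) (adj : rel T) : position T -> Prop :=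
  | LoseAll p : (forall q, nim_move adj p q -> Win adj q) -> Lose adj p.

Definition unit_weighting (T : finType) (adj : rel T) : weighting T :=
  [ffun f : {set T} => if [exists u, exists v, adj u v && (f == [set u; v])]
                       then 1 else 0].

(* The hypercube Q_m: vertices are subsets of {1..m} (here 'I_m), adjacent
   iff they differ in exactly one element. *)
Definition hypercube_adj (m : nat) : rel {set 'I_m} :=
  fun X Y => #|(X :\: Y) :|: (Y :\: X)| == 1.

(* Main.v *)
Require Import Defs.
From mathcomp Require Import all_boot.
From mathcomp Require Import zify.
Set Implicit Arguments. Unset Strict Implicit. Unset Printing Implicit Defensive.

Section Cube.
Variable m : nat.
Local Notation T := {set 'I_m}.
Local Notation adj := (@hypercube_adj m).

Definition E0 (j : 'I_m) : {set T} := [set set0; [set j]].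
Definition E1 (a b : 'I_m) : {set T} := [set [set a]; [set a; b]].
Definition Sw (w : weighting T) := \sum_(f : {set T}) w f.

Lemma set2C (U : finType) (a b : U) : [set a; b] = [set b; a].
Proof. by rewrite setUC. Qed.

Lemma move_dec w v w' u : nim_move adj (w, v) (w', u) -> Sw w' < Sw w.
Proof.
move=> [_ lt eq]; rewrite /Sw (bigD1 [set v; u]) //= [X in _ < X](bigD1 [set v; u]) //=.
rewrite (eq_bigr (fun f => w f)); last by move=> f hf; exact: eq.
by rewrite ltn_add2r.
Qed.

Lemma symd (X Y : T) : adj X Y -> exists x, forall y, (y \in Y) = (y \in X) (+) (y == x).
Proof.
rewrite /hypercube_adj => /cards1P [x hx]; exists x => y.
have : (y \in X :\: Y :|: Y :\: X) = (y \in [set x]) by rewrite hx.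
rewrite !inE => <-.
by case: (y \in X); case: (y \in Y).
Qed.

Lemma adj_of (X Y : T) x : (forall y, (y \in Y) = (y \in X) (+) (y == x)) -> adj X Y.
Proof.
move=> hy; rewrite /hypercube_adj.
have -> : (X :\: Y) :|: (Y :\: X) = [set x].
  by apply/setP => y; rewrite !inE hy; case: (y \in X); case: (y == x).
by rewrite cards1.
Qed.

Lemma adj_single i u : adj [set i] u -> u = set0 \/ exists2 j, j != i & u = [set i; j].
Proof.
case/symd => x hx; case: (eqVneq x i) => [exi | hxi]; first subst x.
  by left; apply/setP => y; rewrite hx in_set1 addbb in_set0.
right; exists x => //; apply/setP => y; rewrite hx !inE.
case: (eqVneq y i) => [->|hyi] /=; first by rewrite eq_sym hxi.
by case: (y == x).
Qed.

Lemma set1_n0 (a : 'I_m) : ([set a] == set0) = false.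
Proof. apply/negbTE/set0Pn; exists a; by rewrite inE. Qed.

Lemma set2_n0 (a b : 'I_m) : ([set a; b] == set0) = false.
Proof. apply/negbTE/set0Pn; exists a; by rewrite !inE eqxx. Qed.

Lemma set0_E1 a b : set0 \notin E1 a b.
Proof. by rewrite !inE ![set0 == _]eq_sym set1_n0 set2_n0. Qed.

Lemma E1_ne_set0 a b (X : {set T}) : set0 \in X -> (E1 a b == X) = false.
Proof. move=> h; apply/negbTE; apply: contraNneq (set0_E1 a b) => ->; exact: h. Qed.

Lemma E0_inj i j : E0 j = E0 i -> j = i.
Proof.
move=> h; have : [set j] \in E0 i by rewrite -h !inE eqxx orbT.
rewrite !inE set1_n0 /= => /eqP; exact: set1_inj.
Qed.

Lemma E1_inj a b i j : a != b -> i != j -> E1 a b = E1 i j -> a = i /\ b = j.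
Proof.
move=> hab hij h.
have : [set a] \in E1 i j by rewrite -h !inE eqxx.
rewrite !inE => /orP [/eqP/set1_inj ea | /eqP hc]; last first.
  have : #|[set a]| = #|[set i; j]| by rewrite hc.
  by rewrite cards1 cards2 hij.
subst a; split => //.
have : [set i; b] \in E1 i j by rewrite -h !inE eqxx orbT.
rewrite !inE => /orP [/eqP hc | /eqP hc].
  have : #|[set i; b]| = #|[set i]| by rewrite hc.
  by rewrite cards1 cards2 hab.
have : b \in [set i; j] by rewrite -hc !inE eqxx orbT.
by rewrite !inE eq_sym (negbTE hab) /= => /eqP.
Qed.

Definition Z (w : weighting T) := [set j : 'I_m | w (E0 j) == 0].
Definition Inv (w : weighting T) :=
  [/\ forall f, w f <= 1, forall a b, w (E1 a b) = w (E1 b a) & odd #|Z w|].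

Lemma Z_step (w w' : weighting T) i : w (E0 i) != 0 -> w' (E0 i) = 0 ->
  (forall j, j != i -> w' (E0 j) = w (E0 j)) -> #|Z w'| = (#|Z w|).+1.
Proof.
move=> h0 h1 h2.
have -> : Z w' = i |: Z w.
  apply/setP => j; rewrite !inE; case: (eqVneq j i) => [->|hji] /=.
    by rewrite h1.
  by rewrite h2.
by rewrite cardsU1 inE h0.
Qed.

Lemma unit_le1 f : unit_weighting adj f <= 1.
Proof. by rewrite ffunE; case: ifP. Qed.

Lemma unit_adj u v : adj u v -> unit_weighting adj [set u; v] = 1.
Proof.
move=> h; rewrite ffunE ifT //.
by apply/existsP; exists u; apply/existsP; exists v; rewrite h eqxx.
Qed.

Hypothesis hodd : odd m.

Lemma main_lose N : forall w i, Sw w < N -> Inv w -> Lose adj (w, [set i]).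
Proof.
elim: N => // N IH w i hS [h1 h2 h3].
constructor => -[w' u] hmv.
have hS' := move_dec hmv.
move: hmv => /= [hadj hlt heq].
case: (adj_single hadj) => [eu | [j hji eu]]; subst u.
-
  have eE : [set [set i]; set0] = E0 i by rewrite /E0 set2C.
  rewrite eE in hlt heq.
  have hw'i : w' (E0 i) = 0.
    by apply/eqP; rewrite -leqn0 -ltnS; exact: leq_trans hlt (h1 _).
  have hZ' : #|Z w'| = (#|Z w|).+1.
    apply: (Z_step (i := i)) => //; first by rewrite -lt0n; exact: leq_ltn_trans (leq0n _) hlt.
    move=> j hj; apply: heq; apply/negP => /eqP /E0_inj; exact/eqP.
  have [k hk] : exists k, k \notin Z w'.
    apply/existsP; apply: contraT; rewrite negb_exists => /forallP hall.
    have : Z w' = setT by apply/setP => k; rewrite in_setT; apply/negPn/hall.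
    move=> hT; have : #|Z w'| = m by rewrite hT cardsT card_ord.
    by rewrite hZ' => hm; move: hodd; rewrite -hm /= h3.
  have hk' : 0 < w' (E0 k) by move: hk; rewrite inE lt0n.
  pose w'' : weighting T := [ffun f => if f == E0 k then 0 else w' f].
  apply: (@WinMove _ _ _ (w'', [set k])).
    split => /=.
    + by apply: (adj_of (x := k)) => y; rewrite !inE.
    + by rewrite ffunE eqxx.
    + by move=> f /negbTE hf; rewrite ffunE hf.
  have hS'' : Sw w'' < Sw w'.
    apply: (@move_dec w' set0 w'' [set k]); split => /=.
    + by apply: (adj_of (x := k)) => y; rewrite !inE.
    + by rewrite ffunE eqxx.
    + by move=> f /negbTE hf; rewrite ffunE hf.
  apply: IH; first exact: leq_trans hS'' (leq_trans (ltnW hS') hS).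
  split.
  + move=> f; rewrite ffunE; case: ifP => // _.
    case: (eqVneq f (E0 i)) => [->|hf]; first by rewrite hw'i.
    by rewrite heq // h1.
  + move=> a b; rewrite !ffunE.
    have hk0 : set0 \in E0 k by rewrite !inE eqxx.
    have hi0 : set0 \in E0 i by rewrite !inE eqxx.
    rewrite (E1_ne_set0 a b hk0) (E1_ne_set0 b a hk0).
    rewrite heq; last by rewrite (E1_ne_set0 _ _ hi0).
    rewrite heq; last by rewrite (E1_ne_set0 _ _ hi0).
    exact: h2.
  + have hZ'' : #|Z w''| = (#|Z w'|).+1.
      apply: (Z_step (i := k)).
      * by rewrite -lt0n.
      * by rewrite ffunE eqxx.
      * move=> l hl; rewrite ffunE; case: eqP => [/E0_inj hlk|_ //].
        by rewrite hlk eqxx in hl.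
    by rewrite hZ'' /= hZ' /= negbK.
-
  have hw'1 : w' (E1 i j) = 0.
    by apply/eqP; rewrite -leqn0 -ltnS; exact: leq_trans hlt (h1 _).
  have hw1 : w (E1 i j) = 1.
    by apply/eqP; rewrite eqn_leq h1 /=; apply: leq_ltn_trans (leq0n _) hlt.
  have hne : E1 j i != E1 i j.
    apply/negP => /eqP /E1_inj h.
    have hij : i != j by rewrite eq_sym.
    have [ea _] := h hji hij.
    by rewrite ea eqxx in hji.
  have hwji : w' (E1 j i) = 1 by rewrite heq // -h2.
  pose w'' : weighting T := [ffun f => if f == E1 j i then 0 else w' f].
  have hmv2 : nim_move adj (w', [set i; j]) (w'', [set j]).
    have eE : [set [set i; j]; [set j]] = E1 j i by rewrite /E1 set2C (set2C i).
    split => /=; rewrite ?eE.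
    + apply: (adj_of (x := i)) => y; rewrite !inE.
      case: (eqVneq y i) => [->|] /=; first by rewrite eq_sym (negbTE hji).
      by case: (y == j).
    + by rewrite ffunE eqxx hwji.
    + by move=> f /negbTE hf; rewrite ffunE hf.
  apply: (WinMove hmv2).
  have hS'' := move_dec hmv2.
  apply: IH; first exact: leq_trans hS'' (leq_trans (ltnW hS') hS).
  have hij : i != j by rewrite eq_sym.
  have hw'' : forall f, w'' f = if f \in [set E1 i j; E1 j i] then 0 else w f.
    move=> f; rewrite ffunE !inE.
    case: (eqVneq f (E1 j i)) => [->|hf]; first by rewrite ?eqxx ?orbT.
    rewrite orbF.
    case: (eqVneq f (E1 i j)) => [->|hf2]; first exact: hw'1.
    exact: heq.
  split.
  + by move=> f; rewrite hw''; case: ifP.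
  + move=> a b; case: (eqVneq a b) => [->|hab]; first by [].
    have key : forall c d, c != d -> E1 c d \in [set E1 i j; E1 j i] ->
                           E1 d c \in [set E1 i j; E1 j i].
      move=> c d hcd; rewrite !inE => /orP [/eqP h | /eqP h].
        have [-> ->] := E1_inj hcd hij h.
        by rewrite eqxx orbT.
      have [-> ->] := E1_inj hcd hji h.
      by rewrite eqxx.
    rewrite !hw'' (h2 a b).
    have -> : (E1 a b \in [set E1 i j; E1 j i]) = (E1 b a \in [set E1 i j; E1 j i]).
      apply/idP/idP; first exact: key.
      by apply: key; rewrite eq_sym.
    by [].
  + have -> : Z w'' = Z w; last exact: h3.
    apply/setP => l.
    have h0l : set0 \in E0 l by rewrite !inE eqxx.
    rewrite !inE hw'' !inE (eq_sym (E0 l)) (E1_ne_set0 _ _ h0l).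
    by rewrite (eq_sym (E0 l)) (E1_ne_set0 _ _ h0l).
Qed.

End Cube.

Lemma win_odd m : odd m ->
  Win (@hypercube_adj m) (unit_weighting (@hypercube_adj m), set0).
Proof.
case: m => [//|m'] hodd.
pose i0 : 'I_m'.+1 := ord0.
pose w1 : weighting _ := [ffun f => if f == E0 i0 then 0
                          else unit_weighting (@hypercube_adj m'.+1) f].
have hadj0 : @hypercube_adj m'.+1 set0 [set i0].
  by apply: (adj_of (x := i0)) => y; rewrite !inE.
have hmv : nim_move (@hypercube_adj m'.+1)
   (unit_weighting (@hypercube_adj m'.+1), set0) (w1, [set i0]).
  split => //.
  + by rewrite ffunE eqxx (unit_adj hadj0).
  + by move=> f /negbTE hf; rewrite ffunE hf.
apply: (WinMove hmv).
apply: (main_lose hodd (N := (Sw w1).+1)); first exact: ltnSn.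
have h0 : set0 \in E0 i0 by rewrite !inE eqxx.
split.
- by move=> f; rewrite ffunE; case: ifP => _; [| exact: unit_le1].
- move=> a b; rewrite [w1 (E1 a b)]ffunE [w1 (E1 b a)]ffunE (E1_ne_set0 a b h0) (E1_ne_set0 b a h0) /=.
  case: (eqVneq a b) => [->|hab]; first by [].
  rewrite !unit_adj //.
  + apply: (adj_of (x := a)) => y; rewrite !inE.
    case: (eqVneq y a) => [->|] /=; first by rewrite (negbTE hab).
    by case: (y == b).
  + apply: (adj_of (x := b)) => y; rewrite !inE.
    case: (eqVneq y b) => [->|] /=; first by rewrite eq_sym (negbTE hab).
    by case: (y == a).
- have -> : Z w1 = [set i0]; last by rewrite cards1.
  apply/setP => j; rewrite !inE ffunE.
  case: (eqVneq j i0) => [->|hj]; first by rewrite eqxx.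
  have -> : (E0 j == E0 i0) = false.
    by apply/negbTE; apply: contra hj => /eqP /E0_inj ->.
  rewrite /= /E0 unit_adj //; apply: (adj_of (x := j)) => y; rewrite !inE.
  by case: (y == j).
Qed.

Theorem mainTheorem2 (n : nat) (hn : 1 <= n) :
  Win (@hypercube_adj (2 * n + 1))
      (unit_weighting (@hypercube_adj (2 * n + 1)), set0).
Proof. by apply: win_odd; rewrite addn1 /= oddM andFb. Qed.
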